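(* Let $M,N$ be complete pointed metric spaces and $f\colon M\to N$ a Lipschitz map with $f(0_M)=0_N$. Suppose: $(P_1)$ for every bounded $S\subset M$, $f(S)$ is totally bounded in $N$; $(P_2)$ $\displaystyle\lim_{d(x,y)\to0}\frac{d(f(x),f(y))}{d(x,y)}=0$ (uniform local flatness); $(P_4)$ $f$ is flat at infinity: $\displaystyle\lim_{d(x,0_M)\to\infty,\ d(y,0_M)\to\infty}\frac{d(f(x),f(y))}{d(x,y)}=0$ (limit over pairs $x\neq y$), i.e. for every $\varepsilon>0$ there is $R>0$ such that $d(f(x),f(y))\le\varepsilon d(x,y)$ whenever $x\neq y$ and $d(x,0_M),d(y,0_M)\ge R$. Then $\widehat f\colon\mathcal F(M)\to\mathcal F(N)$ is compact.
   Context: Scalars are $\mathbb K=\mathbb R$ or $\mathbb C$. For a pointed metric space $(M,d,0_M)$, $\mathrm{Lip}_0(M)$ denotes the Banach space of Lipschitz functions $g\colon M\to\mathbb K$ with $g(0_M)=0$ normed by the best Lipschitz constant; $\delta(x)\in\mathrm{Lip}_0(M)^*$ is evaluation at $x$; the Lipschitz-free space $\mathcal F(M)$ is the norm-closed linear span of $\{\delta(x):x\in M\}$ in $\mathrm{Lip}_0(M)^*$. For a Lipschitz map $f\colon M\to N$ with $f(0_M)=0_N$, $\widehat f\colon\mathcal F(M)\to\mathcal F(N)$ is the unique bounded linear operator with $\widehat f(\delta(x))=\delta(f(x))$ for all $x\in M$. *)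

(* Defs.v *)
From Stdlib Require Import Reals List.
From Coquelicot Require Import Coquelicot Complex.
Open Scope R_scope.

Definition is_metric {X : Type} (d : X -> X -> R) : Prop :=
  (forall x y, 0 <= d x y) /\
  (forall x y, d x y = 0 <-> x = y) /\
  (forall x y, d x y = d y x) /\
  (forall x y z, d x z <= d x y + d y z).

Definition is_complete {X : Type} (d : X -> X -> R) : Prop :=
  forall u : nat -> X,
    (forall eps, 0 < eps -> exists N, forall m n, (N <= m)%nat -> (N <= n)%nat -> d (u m) (u n) < eps) ->
    exists l, forall eps, 0 < eps -> exists N, forall n, (N <= n)%nat -> d (u n) l < eps.

Definition lipschitz_map {X Y : Type} (dX : X -> X -> R) (dY : Y -> Y -> R) (f : X -> Y) : Prop :=
  exists L, forall x y, dY (f x) (f y) <= L * dX x y.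

Definition lip_le {K : AbsRing} {X : Type} (d : X -> X -> R) (g : X -> K) (L : R) : Prop :=
  forall x y, abs (minus (g x) (g y)) <= L * d x y.

Definition Lip0 {K : AbsRing} {X : Type} (d : X -> X -> R) (x0 : X) (g : X -> K) : Prop :=
  g x0 = zero /\ exists L, lip_le d g L.

Definition Lip0_ball {K : AbsRing} {X : Type} (d : X -> X -> R) (x0 : X) (g : X -> K) : Prop :=
  g x0 = zero /\ lip_le d g 1.

(** Functionals on Lip_0(M) are represented as maps (X -> K) -> K;
    only their values on Lip_0(M) matter. *)
Definition functional (K : AbsRing) (X : Type) := (X -> K) -> K.

Definition dnorm_le {K : AbsRing} {X : Type} (d : X -> X -> R) (x0 : X)
  (phi : functional K X) (c : R) : Prop :=
  forall g, Lip0_ball d x0 g -> abs (phi g) <= c.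

Definition in_dual {K : AbsRing} {X : Type} (d : X -> X -> R) (x0 : X) (phi : functional K X) : Prop :=
  (forall g h, Lip0 d x0 g -> Lip0 d x0 h -> phi (fun x => plus (g x) (h x)) = plus (phi g) (phi h)) /\
  (forall (a : K) g, Lip0 d x0 g -> phi (fun x => mult a (g x)) = mult a (phi g)) /\
  (exists C, dnorm_le d x0 phi C).

Definition delta {K : AbsRing} {X : Type} (x : X) : functional K X := fun g => g x.

Definition lincomb {K : AbsRing} {X : Type} (l : list (K * X)) : functional K X :=
  fun g => fold_right (fun p acc => plus (mult (fst p) (delta (snd p) g)) acc) zero l.

Definition fdiff {K : AbsRing} {X : Type} (phi psi : functional K X) : functional K X :=
  fun g => minus (phi g) (psi g).

(** The Lipschitz-free space F(M): norm-closed linear span of the delta(x) in Lip_0(M)^*. *)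
Definition in_free {K : AbsRing} {X : Type} (d : X -> X -> R) (x0 : X) (phi : functional K X) : Prop :=
  in_dual d x0 phi /\
  forall eps, 0 < eps -> exists l : list (K * X), dnorm_le d x0 (fdiff phi (lincomb l)) eps.

Definition feq {K : AbsRing} {X : Type} (d : X -> X -> R) (x0 : X) (phi psi : functional K X) : Prop :=
  forall g, Lip0 d x0 g -> phi g = psi g.

Definition bounded_linear_free {K : AbsRing} {X Y : Type}
  (dX : X -> X -> R) (x0 : X) (dY : Y -> Y -> R) (y0 : Y)
  (T : functional K X -> functional K Y) : Prop :=
  (forall phi, in_free dX x0 phi -> in_free dY y0 (T phi)) /\
  (forall (a : K) phi psi, in_free dX x0 phi -> in_free dX x0 psi ->
     feq dY y0 (T (fun g => plus (mult a (phi g)) (psi g)))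
               (fun g => plus (mult a (T phi g)) (T psi g))) /\
  (exists C, forall phi c, in_free dX x0 phi -> dnorm_le dX x0 phi c ->
     dnorm_le dY y0 (T phi) (C * c)).

Definition compact_operator {K : AbsRing} {X Y : Type}
  (dX : X -> X -> R) (x0 : X) (dY : Y -> Y -> R) (y0 : Y)
  (T : functional K X -> functional K Y) : Prop :=
  forall phi : nat -> functional K X,
    (forall n, in_free dX x0 (phi n) /\ dnorm_le dX x0 (phi n) 1) ->
    exists (sigma : nat -> nat) (psi : functional K Y),
      (forall n, (sigma n < sigma (S n))%nat) /\
      in_free dY y0 psi /\
      forall eps, 0 < eps -> exists N, forall k, (N <= k)%nat ->
        dnorm_le dY y0 (fdiff (T (phi (sigma k))) psi) eps.

(* Main.v *)
Require Import Defs.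
From Stdlib Require Import Reals List Lra Lia ZArith Classical FunctionalExtensionality ClassicalEpsilon.
From Coquelicot Require Import Coquelicot Complex.
Open Scope R_scope.

Section GAlg.
Context {G : AbelianGroup}.
Lemma plus4 (p q r s : G) : plus (plus p q) (plus r s) = plus (plus p r) (plus q s).
Proof.
  rewrite <- !plus_assoc. f_equal. rewrite !plus_assoc. f_equal. apply plus_comm.
Qed.
Lemma minus_plus2 (a b c d : G) : minus (plus a b) (plus c d) = plus (minus a c) (minus b d).
Proof. unfold minus at 1. rewrite opp_plus. apply plus4. Qed.
Lemma minus_minus2 (a b c d : G) : minus (minus a b) (minus c d) = plus (minus a c) (opp (minus b d)).
Proof.
  change (minus (plus a (opp b)) (plus c (opp d)) = plus (minus a c) (opp (minus b d))).
  rewrite minus_plus2. f_equal. rewrite opp_minus. unfold minus. rewrite opp_opp. apply plus_comm.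
Qed.
Lemma minus_zero_r' (a : G) : minus a zero = a.
Proof. apply minus_zero_r. Qed.
Lemma plus_opp_minus (a b : G) : plus (opp a) b = minus b a.
Proof. unfold minus. apply plus_comm. Qed.
Lemma plus_minus_cancel (a b : G) : plus (minus a b) b = a.
Proof. unfold minus. rewrite <- plus_assoc, plus_opp_l. apply plus_zero_r. Qed.
End GAlg.

Section RAlg.
Context {K : Ring}.
Lemma mult_minus (a u v : K) : mult a (minus u v) = minus (mult a u) (mult a v).
Proof. change (mult a (plus u (opp v)) = plus (mult a u) (opp (mult a v))).
  rewrite mult_distr_l, opp_mult_r. reflexivity. Qed.
Lemma mult_m1 (a : K) : mult (opp one) a = opp a.
Proof. rewrite <- opp_mult_m1. reflexivity. Qed.
End RAlg.

Section KAlg.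
Context {K : AbsRing}.

Lemma abs_tri3 (a b c : K) : abs (minus a c) <= abs (minus a b) + abs (minus b c).
Proof. rewrite (minus_trans (G:=K) b). apply abs_triangle. Qed.

Lemma abs_4 (a b c d : K) : abs (minus (minus a b) (minus c d)) <= abs (minus a c) + abs (minus b d).
Proof.
  rewrite (minus_minus2 (G:=K)). eapply Rle_trans. apply abs_triangle. rewrite abs_opp. lra.
Qed.

Lemma abs_minus0 (a : K) : abs (minus a zero) = abs a.
Proof. rewrite (minus_zero_r (G:=K)). reflexivity. Qed.
Lemma abs_minus_eq (a b : K) : a = b -> abs (minus a b) = 0.
Proof. intros ->. rewrite (minus_eq_zero (G:=K)). apply abs_zero. Qed.
End KAlg.

Section KAlg2.
Context {K : AbsRing}.
Lemma minus_zero_eq (a b : K) : minus a b = zero -> a = b.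
Proof.
  intros H. rewrite <- (plus_minus_cancel (G:=K) a b), H. apply (plus_zero_l (G:=K)).
Qed.

Lemma abs_le_all (a b : K) M : (forall eps, 0 < eps -> abs (minus a b) <= eps * M) -> a = b.
Proof.
  intros H. apply minus_zero_eq. apply abs_eq_zero.
  pose proof (abs_ge_0 (minus a b)) as H0.
  destruct (Req_dec (abs (minus a b)) 0) as [E|E]; auto.
  assert (P : 0 < abs (minus a b)) by lra.
  set (e := abs (minus a b) / (2 * (Rabs M + 1))).
  assert (He : 0 < e). { unfold e. apply Rdiv_lt_0_compat. lra. pose proof (Rabs_pos M). lra. }
  specialize (H e He).
  assert (e * M <= e * Rabs M) by (apply Rmult_le_compat_l; [lra|apply Rle_abs]).
  assert (e * Rabs M < abs (minus a b)).
  { unfold e. pose proof (Rabs_pos M).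
    apply Rlt_le_trans with (abs (minus a b) * / 2). 2: lra.
    unfold Rdiv. rewrite Rinv_mult.
    replace (abs (minus a b) * (/ 2 * / (Rabs M + 1)) * Rabs M) with
      (abs (minus a b) * / 2 * (Rabs M / (Rabs M + 1))) by (field; lra).
    rewrite <- (Rmult_1_r (abs (minus a b) * / 2)) at 2.
    apply Rmult_lt_compat_l. lra. apply Rmult_lt_reg_r with (Rabs M + 1). lra.
    unfold Rdiv. rewrite Rmult_assoc, Rinv_l by lra. lra. }
  lra.
Qed.

Lemma abs_minus_le (a b : K) : abs (minus a b) <= abs a + abs b.
Proof. eapply Rle_trans. apply abs_triangle. rewrite abs_opp. lra. Qed.
Lemma abs_via (a b : K) : abs b <= abs a + abs (minus a b).
Proof.
  rewrite <- (abs_minus0 b), <- (abs_minus0 a). eapply Rle_trans. apply (abs_tri3 _ a).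
  rewrite (abs_minus b a). lra.
Qed.
End KAlg2.

Section Free.
Context {K : AbsRing}.
Hypothesis Kcomm : forall a b : K, mult a b = mult b a.
Hypothesis Kabsm : forall a b : K, abs (mult a b) = abs a * abs b.
Hypothesis Kscale : forall r, 0 < r -> exists a : K, abs a = r.
Context {X : Type} (d : X -> X -> R) (x0 : X).
Hypothesis Hm : is_metric d.

Definition lin_s (psi : functional K X) :=
  forall a h, Lip0 d x0 h -> psi (fun x => mult a (h x)) = mult a (psi h).

Lemma scale_bound psi c h L : lin_s psi -> dnorm_le d x0 psi c -> Lip0 d x0 h ->
  lip_le d h L -> 0 < L -> abs (psi h) <= c * L.
Proof.
  intros Hlin Hb Hh Hl HL.
  destruct (Kscale (/L)) as [a Ha]. apply Rinv_0_lt_compat; auto.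
  assert (B : Lip0_ball d x0 (fun x => mult a (h x))).
  { split.
    - destruct Hh as [h0 _]. rewrite h0. apply (mult_zero_r (K:=K)).
    - intros x y. cbv beta. rewrite <- (mult_minus (K:=K)). rewrite Kabsm, Ha.
      specialize (Hl x y). destruct Hm as [Hd _].
      assert (0 <= d x y) by apply Hd.
      apply Rmult_le_compat_l with (r := /L) in Hl; [|left; apply Rinv_0_lt_compat; auto].
      replace (/ L * (L * d x y)) with (d x y) in Hl by (field; apply Rgt_not_eq; exact HL). rewrite Rmult_1_l; exact Hl. }
  specialize (Hb _ B). rewrite Hlin in Hb by auto. rewrite Kabsm, Ha in Hb.
  apply Rmult_le_compat_l with (r := L) in Hb; [|lra].
  replace (L * (/ L * abs (psi h))) with (abs (psi h)) in Hb by (field; apply Rgt_not_eq; exact HL). lra.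
Qed.

Lemma lin_s_fdiff phi psi : lin_s phi -> lin_s psi -> lin_s (fdiff phi psi).
Proof.
  intros H1 H2 a h Hh. unfold fdiff. rewrite H1, H2 by auto.
  symmetry. apply (mult_minus (K:=K)).
Qed.

Lemma in_dual_lin phi : in_dual d x0 phi -> lin_s phi.
Proof. intros [_ [H _]]. exact H. Qed.

Definition lscale (a : K) (l : list (K * X)) := map (fun p => (mult a (fst p), snd p)) l.

Lemma lincomb_cons (p : K * X) l g :
  lincomb (p :: l) g = plus (mult (fst p) (g (snd p))) (lincomb l g).
Proof. reflexivity. Qed.
Lemma lincomb_nil g : lincomb (K:=K) (X:=X) nil g = zero.
Proof. reflexivity. Qed.

Lemma lincomb_app (l1 l2 : list (K * X)) g :
  lincomb (l1 ++ l2) g = plus (lincomb l1 g) (lincomb l2 g).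
Proof.
  induction l1 as [|p l1 IH].
  - rewrite app_nil_l, lincomb_nil. symmetry. apply (plus_zero_l (G:=K)).
  - rewrite <- app_comm_cons, !lincomb_cons, IH. apply (plus_assoc (G:=K)).
Qed.

Lemma lincomb_scale a (l : list (K * X)) g :
  lincomb (lscale a l) g = mult a (lincomb l g).
Proof.
  induction l as [|[b x] l IH].
  - change (lincomb (K:=K) (X:=X) nil g = mult a (lincomb nil g)). rewrite !lincomb_nil. symmetry. apply (mult_zero_r (K:=K)).
  - change (lincomb ((mult a b, x) :: lscale a l) g = mult a (lincomb ((b,x)::l) g)).
    rewrite !lincomb_cons, IH. simpl. rewrite (mult_distr_l (K:=K)). f_equal.
    symmetry. apply (mult_assoc (K:=K)).
Qed.

Lemma g_bound (g : X -> K) x : Lip0_ball d x0 g -> abs (g x) <= d x x0.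
Proof.
  intros [g0 gl]. specialize (gl x x0). rewrite g0 in gl.
  rewrite (abs_minus0 (K:=K)) in gl. lra.
Qed.

Lemma in_free_zero : in_free d x0 (fun _ => (zero : K)).
Proof.
  split; [split; [|split]|].
  - intros. symmetry. apply (plus_zero_l (G:=K)).
  - intros. symmetry. apply (mult_zero_r (K:=K)).
  - exists 0. intros g _. rewrite (abs_zero (K:=K)). lra.
  - intros eps Heps. exists nil. intros g _. unfold fdiff, lincomb. simpl.
    rewrite abs_minus_eq by reflexivity. lra.
Qed.

Lemma in_free_delta x : in_free d x0 (delta (K:=K) x).
Proof.
  split; [split; [|split]|].
  - intros. reflexivity.
  - intros. reflexivity.
  - exists (d x x0). intros g Hg. apply g_bound; auto.
  - intros eps Heps. exists ((one, x) :: nil). intros g _. unfold fdiff, lincomb, delta. simpl.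
    rewrite abs_minus_eq. lra. rewrite (plus_zero_r (G:=K)). symmetry. apply (mult_one_l (K:=K)).
Qed.

Lemma in_free_comb (a : K) (phi psi : functional K X) : in_free d x0 phi -> in_free d x0 psi ->
  in_free d x0 (fun g => plus (mult a (phi g)) (psi g)).
Proof.
  intros [[Ap [Sp [Cp Bp]]] Fp] [[As [Ss [Cs Bs]]] Fs].
  split; [split; [|split]|].
  - intros g h Hg Hh. rewrite Ap, As by assumption. rewrite (mult_distr_l (K:=K)).
    apply (plus4 (G:=K)).
  - intros b g Hg. rewrite Sp, Ss by auto. rewrite (mult_distr_l (K:=K)). f_equal.
    rewrite !(mult_assoc (K:=K)), (Kcomm a b). reflexivity.
  - exists (abs a * Cp + Cs). intros g Hg. eapply Rle_trans. apply abs_triangle.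
    rewrite Kabsm. specialize (Bp g Hg); specialize (Bs g Hg).
    apply Rplus_le_compat; auto. apply Rmult_le_compat_l; auto. apply abs_ge_0.
  - intros eps Heps.
    assert (Ha : 0 <= abs a) by apply abs_ge_0.
    destruct (Fp (eps / (2 * (abs a + 1)))) as [l1 H1].
    { apply Rdiv_lt_0_compat; lra. }
    destruct (Fs (eps / 2)) as [l2 H2]. lra.
    exists (lscale a l1 ++ l2). intros g Hg. unfold fdiff. rewrite lincomb_app, lincomb_scale.
    rewrite (minus_plus2 (G:=K)). rewrite <- (mult_minus (K:=K)).
    eapply Rle_trans. apply abs_triangle. rewrite Kabsm.
    specialize (H1 g Hg); specialize (H2 g Hg). unfold fdiff in H1, H2.
    assert (abs a * abs (minus (phi g) (lincomb l1 g)) <= abs a * (eps / (2 * (abs a + 1)))).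
    { apply Rmult_le_compat_l; auto. }
    assert (abs a * (eps / (2 * (abs a + 1))) <= eps / 2).
    { unfold Rdiv. rewrite Rinv_mult. 
      assert (abs a * / (abs a + 1) <= 1).
      { apply Rmult_le_reg_r with (abs a + 1). lra. rewrite Rmult_assoc, Rinv_l by lra. lra. }
      assert (0 < / 2) by lra.
      replace (abs a * (eps * (/ 2 * / (abs a + 1)))) with ((abs a * / (abs a + 1)) * (eps * / 2)) by ring.
      rewrite <- (Rmult_1_l (eps * / 2)) at 2. apply Rmult_le_compat_r; lra. }
    apply Rle_trans with (abs a * (eps / (2 * (abs a + 1))) + eps/2).
    apply Rplus_le_compat; assumption. lra.
Qed.

Lemma in_free_lincomb (l : list (K * X)) : in_free d x0 (lincomb l).
Proof.
  induction l as [|[b x] l IH].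
  - apply in_free_zero.
  - change (in_free d x0 (fun g => plus (mult b (delta x g)) (lincomb l g))).
    apply in_free_comb; auto. apply in_free_delta.
Qed.

End Free.

Section Main.
Context {K : AbsRing}.
Hypothesis Kcomm : forall a b : K, mult a b = mult b a.
Hypothesis Kabsm : forall a b : K, abs (mult a b) = abs a * abs b.
Hypothesis Kscale : forall r, 0 < r -> exists a : K, abs a = r.
Hypothesis Kgrid : forall r eta, 0 < eta -> exists Gr : list K,
  forall z, abs z <= r -> exists w, In w Gr /\ abs (minus z w) <= eta.
Hypothesis Kcompl : forall u : nat -> K,
  (forall eps, 0 < eps -> exists N, forall m n, (N <= m)%nat -> (N <= n)%nat -> abs (minus (u m) (u n)) <= eps) ->
  exists l, forall eps, 0 < eps -> exists N, forall n, (N <= n)%nat -> abs (minus (u n) l) <= eps.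
Context {X Y : Type} (dX : X -> X -> R) (dY : Y -> Y -> R) (x0 : X) (y0 : Y).
Hypothesis HmX : is_metric dX.
Hypothesis HmY : is_metric dY.
Context (f : X -> Y) (Lf : R).
Hypothesis HLf0 : 0 <= Lf.
Hypothesis HLf : forall x y, dY (f x) (f y) <= Lf * dX x y.
Hypothesis Hf0 : f x0 = y0.
Hypothesis HP1 : forall S : X -> Prop, (exists r, forall x, S x -> dX x x0 <= r) ->
           forall eps, 0 < eps -> exists l : list Y,
             forall x, S x -> exists y, In y l /\ dY (f x) y <= eps.
Hypothesis HP2 : forall eps, 0 < eps -> exists delta, 0 < delta /\
           forall x y, x <> y -> dX x y < delta -> dY (f x) (f y) <= eps * dX x y.
Hypothesis HP4 : forall eps, 0 < eps -> exists Rad, 0 < Rad /\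
           forall x y, x <> y -> Rad <= dX x x0 -> Rad <= dX y x0 ->
             dY (f x) (f y) <= eps * dX x y.
Context (T : functional K X -> functional K Y).
Hypothesis HT : bounded_linear_free dX x0 dY y0 T.
Hypothesis HTd : forall x, feq dY y0 (T (delta x)) (delta (f x)).

Lemma lip_mono {Z : Type} (d : Z -> Z -> R) (Hd : is_metric d) (g : Z -> K) L L' :
  lip_le d g L -> L <= L' -> lip_le d g L'.
Proof.
  intros H HL x y. destruct Hd as [Hn _]. specialize (Hn x y). specialize (H x y).
  eapply Rle_trans. exact H. apply Rmult_le_compat_r; auto.
Qed.

Lemma lip_pos {Z : Type} (d : Z -> Z -> R) (Hd : is_metric d) (g : Z -> K) L :
  lip_le d g L -> lip_le d g (Rmax L 0 + 1).
Proof. intros H. eapply lip_mono; eauto. pose proof (Rmax_l L 0). lra. Qed.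

Lemma comp_lip (g : Y -> K) L : lip_le dY g L -> 0 <= L -> lip_le dX (fun x => g (f x)) (L * Lf).
Proof.
  intros H HL x y. eapply Rle_trans. apply H. rewrite Rmult_assoc.
  apply Rmult_le_compat_l; auto.
Qed.

Lemma comp_Lip0 (g : Y -> K) : Lip0 dY y0 g -> Lip0 dX x0 (fun x => g (f x)).
Proof.
  intros [g0 [L HL]]. split. rewrite Hf0. exact g0.
  exists ((Rmax L 0 + 1) * Lf). apply comp_lip. apply lip_pos; auto.
  pose proof (Rmax_r L 0). lra.
Qed.

Lemma ball_Lip0 {Z : Type} (d : Z -> Z -> R) z0 (g : Z -> K) : Lip0_ball d z0 g -> Lip0 d z0 g.
Proof. intros [H1 H2]. split; auto. exists 1; auto. Qed.

Lemma Lip0_scal {Z : Type} (d : Z -> Z -> R) z0 (g : Z -> K) (a : K) :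
  Lip0 d z0 g -> Lip0 d z0 (fun x => mult a (g x)).
Proof.
  intros [g0 [L HL]]. split. rewrite g0. apply (mult_zero_r (K:=K)).
  exists (abs a * L). intros x y. cbv beta. rewrite <- (mult_minus (K:=K)), Kabsm.
  rewrite Rmult_assoc. apply Rmult_le_compat_l. apply abs_ge_0. apply HL.
Qed.

Lemma Lip0_plus {Z : Type} (d : Z -> Z -> R) z0 (g h : Z -> K) :
  Lip0 d z0 g -> Lip0 d z0 h -> Lip0 d z0 (fun x => plus (g x) (h x)).
Proof.
  intros [g0 [L HL]] [h0 [M HM]]. split. rewrite g0, h0. apply (plus_zero_l (G:=K)).
  exists (L + M). intros x y. cbv beta. rewrite (minus_plus2 (G:=K)).
  eapply Rle_trans. apply abs_triangle. rewrite Rmult_plus_distr_r.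
  apply Rplus_le_compat; auto.
Qed.

Lemma lin_minus {Z : Type} (d : Z -> Z -> R) z0 (phi : functional K Z) (u v : Z -> K) :
  in_dual d z0 phi -> Lip0 d z0 u -> Lip0 d z0 v ->
  phi (fun x => minus (u x) (v x)) = minus (phi u) (phi v).
Proof.
  intros [Ha [Hs _]] Hu Hv.
  assert (E : (fun x => minus (u x) (v x)) = (fun x => plus (u x) (mult (opp one) (v x)))).
  { apply functional_extensionality. intros x. rewrite (mult_m1 (K:=K)). reflexivity. }
  rewrite E, Ha; auto. rewrite Hs; auto. rewrite (mult_m1 (K:=K)). reflexivity.
  apply Lip0_scal; auto.
Qed.

Lemma T_zero g : Lip0 dY y0 g -> T (fun _ => zero) g = zero.
Proof.
  intros Hg. destruct HT as [_ [Hlin _]].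
  pose proof (Hlin (opp one) (fun _ => zero) (fun _ => zero) (in_free_zero dX x0)
     (in_free_zero dX x0) g Hg) as E. cbv beta in E.
  assert (Text : forall u v, (forall h, u h = v h) -> T u = T v).
  { intros u v H. f_equal. apply functional_extensionality. exact H. }
  rewrite (Text _ (fun _ => zero)) in E.
  2:{ intros h. transitivity (mult (opp one) (zero : K)). apply (plus_zero_r (G:=K)). apply (mult_zero_r (K:=K)). } rewrite (mult_m1 (K:=K)), (plus_opp_l (G:=K)) in E. exact E.
Qed.

Lemma T_lincomb (l : list (K * X)) g : Lip0 dY y0 g -> T (lincomb l) g = lincomb l (fun x => g (f x)).
Proof.
  intros Hg. induction l as [|[b x] l IH].
  - change (T (fun _ => zero) g = zero). apply T_zero; auto.
  - change (T (fun h => plus (mult b (delta x h)) (lincomb l h)) g =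
            plus (mult b (g (f x))) (lincomb l (fun x => g (f x)))).
    destruct HT as [_ [Hlin _]].
    rewrite (Hlin b (delta x) (lincomb l)); auto.
    rewrite HTd, IH; auto.
    apply in_free_delta; auto. apply in_free_lincomb; auto.
Qed.

Lemma T_id (phi : functional K X) (g : Y -> K) :
  in_free dX x0 phi -> Lip0 dY y0 g -> T phi g = phi (fun x => g (f x)).
Proof.
  intros Hphi Hg.
  pose proof HT as [Hmap [Hlin [C HC]]].
  pose proof Hg as [g0 [Lg HLg]].
  set (Lg' := Rmax Lg 0 + 1).
  assert (HLg' : lip_le dY g Lg') by (apply lip_pos; auto).
  assert (PLg : 0 < Lg') by (unfold Lg'; pose proof (Rmax_r Lg 0); lra).
  assert (Hgf : Lip0 dX x0 (fun x => g (f x))) by (apply comp_Lip0; auto).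
  assert (Hgf' : lip_le dX (fun x => g (f x)) (Lg' * (Lf + 1))).
  { apply lip_mono with (L := Lg' * Lf); auto. apply comp_lip; auto; lra. apply Rmult_le_compat_l; lra. }
  apply (abs_le_all _ _ (Rabs C * Lg' + Lg' * (Lf + 1))).
  intros eps Heps.
  pose proof Hphi as [Hdphi Happ]. destruct (Happ eps Heps) as [l Hl].
  set (chi := fun h => plus (mult (opp one) (lincomb l h)) (phi h)).
  assert (Hchi : in_free dX x0 chi).
  { apply in_free_comb; auto. apply in_free_lincomb; auto. }
  assert (Hchib : dnorm_le dX x0 chi eps).
  { intros h Hh. unfold chi. rewrite (mult_m1 (K:=K)), (plus_opp_minus (G:=K)). apply Hl; auto. }
  assert (E1 : T chi g = minus (T phi g) (lincomb l (fun x => g (f x)))).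
  { unfold chi. rewrite (Hlin (opp one) (lincomb l) phi); auto.
    rewrite T_lincomb; auto. rewrite (mult_m1 (K:=K)). apply (plus_opp_minus (G:=K)).
    apply in_free_lincomb; auto. }
  assert (B1 : abs (T chi g) <= C * eps * Lg').
  { apply (scale_bound Kabsm Kscale dY y0); auto.
    apply in_dual_lin. apply Hmap; auto. }
  assert (B2 : abs (fdiff phi (lincomb l) (fun x => g (f x))) <= eps * (Lg' * (Lf + 1))).
  { apply (scale_bound Kabsm Kscale dX x0); auto.
    - apply lin_s_fdiff; apply in_dual_lin; auto. apply in_free_lincomb; auto.
    - apply Rmult_lt_0_compat; lra. }
  unfold fdiff in B2. rewrite E1 in B1.
  eapply Rle_trans. apply (abs_tri3 _ (lincomb l (fun x => g (f x)))).
  rewrite (abs_minus (lincomb l _)).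
  assert (C * eps * Lg' <= Rabs C * eps * Lg').
  { apply Rmult_le_compat_r. lra. apply Rmult_le_compat_r. lra. apply Rle_abs. }
  apply Rle_trans with (C * eps * Lg' + eps * (Lg' * (Lf + 1))).
  apply Rplus_le_compat; assumption. nra.
Qed.

Lemma flat eps : 0 < eps -> exists (ys : list Y) (eta : R), 0 < eta /\
  forall g g' : Y -> K, Lip0_ball dY y0 g -> Lip0_ball dY y0 g' ->
    (forall y, In y ys -> abs (minus (g y) (g' y)) <= eta) ->
    lip_le dX (fun x => minus (g (f x)) (g' (f x))) eps.
Proof.
  intros Heps.
  pose proof HmX as [dXn [dX0 [dXs dXt]]].
  pose proof HmY as [dYn [dY0 [dYs dYt]]].
  set (e' := eps / 8).
  destruct (HP2 e') as [de [Hde Hd2]]. unfold e'; lra.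
  destruct (HP4 e') as [R0 [HR0 Hd4]]. unfold e'; lra.
  assert (HRw : exists Rw, 0 <= Rw /\ ((exists w, R0 <= dX w x0 /\ dX w x0 <= Rw) \/
                                       (forall w, dX w x0 < R0))).
  { destruct (classic (exists w, R0 <= dX w x0)) as [[w Hw]|Hn].
    - exists (dX w x0). split. apply dXn. left. exists w. split; lra.
    - exists 0. split. lra. right. intros w. apply Rnot_le_lt. intros Hw. apply Hn. exists w; auto. }
  destruct HRw as [Rw [HRw0 HRw]].
  set (R' := 2 * R0 + Rw).
  set (eta := eps * de / 12).
  assert (Heta : 0 < eta) by (unfold eta; apply Rmult_lt_0_compat; [apply Rmult_lt_0_compat|]; lra).
  destruct (HP1 (fun x => dX x x0 <= R')) with (eps := eta) as [ys Hys].
  { exists R'. auto. } auto.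
  exists ys, eta. split; auto.
  intros g g' [g0 gl] [g'0 g'l] Hc.
  set (G := fun x => minus (g (f x)) (g' (f x))).
  assert (F1 : forall x, dX x x0 <= R' -> abs (G x) <= 3 * eta).
  { intros x Hx. destruct (Hys x Hx) as [y [Hy Hfy]].
    unfold G. eapply Rle_trans. apply (abs_tri3 _ (g y)).
    eapply Rle_trans. apply Rplus_le_compat_l. apply (abs_tri3 _ (g' y)).
    pose proof (gl (f x) y). pose proof (g'l y (f x)). pose proof (Hc y Hy).
    rewrite dYs in H0. lra. }
  assert (F2 : forall x y, abs (minus (G x) (G y)) <= 2 * dY (f x) (f y)).
  { intros x y. unfold G. eapply Rle_trans. apply abs_4.
    pose proof (gl (f x) (f y)). pose proof (g'l (f x) (f y)). lra. }
  assert (Near : forall x y, x <> y -> de <= dX x y -> dX x x0 < R0 ->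
                  abs (minus (G x) (G y)) <= eps * dX x y).
  { intros x y Hxy Hd Hx.
    assert (Hx' : dX x x0 <= R') by (unfold R'; lra).
    destruct (Rle_or_lt (dX y x0) R') as [Hy|Hy].
    - eapply Rle_trans. apply abs_minus_le.
      pose proof (F1 x Hx'). pose proof (F1 y Hy).
      assert (6 * eta <= eps * dX x y).
      { unfold eta. replace (6 * (eps * de / 12)) with (eps * de / 2) by field.
        assert (eps * de <= eps * dX x y) by (apply Rmult_le_compat_l; lra).
        pose proof (Rmult_lt_0_compat _ _ Heps Hde). lra. }
      lra.
    - destruct HRw as [[w [Hw1 Hw2]]|Hn].
      2:{ specialize (Hn y). unfold R' in Hy. lra. }
      assert (Hyw : y <> w). { intros ->. unfold R' in Hy. lra. }
      assert (Hw' : dX w x0 <= R') by (unfold R'; lra).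
      pose proof (Hd4 y w Hyw ltac:(unfold R' in Hy; lra) Hw1) as H4.
      pose proof (F2 y w) as H2.
      pose proof (F1 w Hw') as Fw. pose proof (F1 x Hx') as Fx.
      assert (Dyw : dX y w <= dX x y + R0 + Rw).
      { pose proof (dXt y x w). pose proof (dXt x x0 w). rewrite (dXs x0 w) in H0.
        rewrite (dXs y x) in H. lra. }
      assert (Dxy : R0 + Rw <= dX x y).
      { pose proof (dXt y x x0). rewrite (dXs y x) in H. unfold R' in Hy. lra. }
      eapply Rle_trans. apply (abs_tri3 _ (G w)).
      eapply Rle_trans. apply Rplus_le_compat. apply abs_minus_le. rewrite abs_minus. apply Rle_refl.
      assert (6 * eta <= eps * dX x y / 2).
      { unfold eta. replace (6 * (eps * de / 12)) with (eps * de / 2) by field.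
        assert (eps * de <= eps * dX x y) by (apply Rmult_le_compat_l; lra). lra. }
      assert (2 * dY (f y) (f w) <= eps / 2 * dX x y).
      { apply Rle_trans with (2 * (e' * dX y w)). lra. unfold e'.
        assert (0 <= eps) by lra. nra. }
      lra. }
  intros x y. fold (G x). fold (G y).
  destruct (classic (x = y)) as [<-|Hxy].
  { rewrite abs_minus_eq by reflexivity. pose proof (dXn x x). nra. }
  destruct (Rlt_or_le (dX x y) de) as [Hs|Hl].
  { pose proof (Hd2 x y Hxy Hs). pose proof (F2 x y). pose proof (dXn x y).
    assert (2 * dY (f x) (f y) <= eps * dX x y) by (unfold e' in H; nra). lra. }
  destruct (Rle_or_lt R0 (dX x x0)) as [Hx|Hx].
  - destruct (Rle_or_lt R0 (dX y x0)) as [Hy|Hy].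
    + pose proof (Hd4 x y Hxy Hx Hy). pose proof (F2 x y). pose proof (dXn x y).
      assert (2 * dY (f x) (f y) <= eps * dX x y) by (unfold e' in H; nra). lra.
    + rewrite abs_minus. rewrite dXs. apply Near; auto. rewrite dXs; auto.
  - apply Near; auto.
Qed.

Lemma patterns {A : Type} (S : A -> Prop) (fs : list (A -> K)) r eta : 0 < eta ->
  (forall a F, S a -> In F fs -> abs (F a) <= r) ->
  exists P : list (list K), forall a, S a -> exists p, In p P /\
    Forall2 (fun F z => abs (minus (F a) z) <= eta) fs p.
Proof.
  intros Heta. induction fs as [|F fs IH]; intros Hb.
  - exists (nil :: nil). intros a _. exists nil. split. left; auto. constructor.
  - destruct IH as [P HP]. { intros a F' Ha HF. apply Hb; auto. right; auto. }
    destruct (Kgrid r eta Heta) as [Gr HG].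
    exists (flat_map (fun z => map (cons z) P) Gr).
    intros a Ha. destruct (HG (F a)) as [w [Hw1 Hw2]]. apply Hb; auto. left; auto.
    destruct (HP a Ha) as [p [Hp1 Hp2]].
    exists (w :: p). split.
    + apply in_flat_map. exists w. split; auto. apply in_map; auto.
    + constructor; auto.
Qed.

Lemma pigeon {U : Type} (P : list U) (Q : nat -> U -> Prop) :
  (forall n, exists p, In p P /\ Q n p) ->
  exists p, In p P /\ forall N, exists n, (N <= n)%nat /\ Q n p.
Proof.
  revert Q. induction P as [|p P IH]; intros Q H.
  - destruct (H 0%nat) as [p [[] _]].
  - destruct (classic (forall N, exists n, (N <= n)%nat /\ Q n p)) as [Hp|Hp].
    + exists p. split; auto. left; auto.
    + apply not_all_ex_not in Hp. destruct Hp as [N0 HN0].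
      destruct (IH (fun n q => Q (n + N0)%nat q)) as [q [Hq1 Hq2]].
      * intros n. destruct (H (n + N0)%nat) as [q [[<-|Hq] Hq']].
        -- exfalso. apply HN0. exists (n + N0)%nat. split; auto. lia.
        -- exists q; auto.
      * exists q. split. right; auto. intros N. destruct (Hq2 N) as [n [Hn1 Hn2]].
        exists (n + N0)%nat. split; auto. lia.
Qed.

Lemma Forall2_both {A B : Type} (R1 R2 : A -> B -> Prop) l p x :
  Forall2 R1 l p -> Forall2 R2 l p -> In x l -> exists z, R1 x z /\ R2 x z.
Proof.
  intros H1. induction H1 as [|a b l p Hab H1 IH]; intros H2 Hx.
  - destruct Hx.
  - inversion H2; subst. destruct Hx as [<-|Hx].
    + exists b; auto.
    + apply IH; auto.
Qed.

Lemma sum_dist_bound (ys : list Y) y : In y ys -> dY y y0 <= fold_right (fun y acc => dY y y0 + acc) 0 ys.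
Proof.
  pose proof HmY as [dYn _].
  assert (Hnn : forall l, 0 <= fold_right (fun y acc => dY y y0 + acc) 0 l).
  { induction l; simpl. lra. pose proof (dYn a y0). lra. }
  induction ys as [|a ys IH]; simpl; intros Hin. destruct Hin.
  destruct Hin as [<-|H].
  - pose proof (Hnn ys). lra.
  - pose proof (IH H). pose proof (dYn a y0). lra.
Qed.

Lemma net eps : 0 < eps -> exists hs : list (X -> K),
  (forall h, In h hs -> exists g, Lip0_ball dY y0 g /\ h = (fun x => g (f x))) /\
  forall g, Lip0_ball dY y0 g -> exists h, In h hs /\ lip_le dX (fun x => minus (g (f x)) (h x)) eps.
Proof.
  intros Heps.
  destruct (flat eps Heps) as [ys [eta [Heta Hflat]]].
  set (fs := map (fun y (g : Y -> K) => g y) ys).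
  destruct (patterns (Lip0_ball dY y0) fs (fold_right (fun y acc => dY y y0 + acc) 0 ys) (eta / 2))
    as [P HP].
  { lra. }
  { intros g F Hg HF. unfold fs in HF. apply in_map_iff in HF. destruct HF as [y [<- Hy]].
    eapply Rle_trans. apply (g_bound dY y0); auto. apply sum_dist_bound; auto. }
  set (close := fun (g : Y -> K) p => Forall2 (fun F z => abs (minus (F g) z) <= eta / 2) fs p).
  assert (Claim : forall P0 : list (list K), exists hs : list (X -> K),
    (forall h, In h hs -> exists g, Lip0_ball dY y0 g /\ h = (fun x => g (f x))) /\
    forall g, Lip0_ball dY y0 g -> (exists p, In p P0 /\ close g p) ->
      exists h, In h hs /\ lip_le dX (fun x => minus (g (f x)) (h x)) eps).
  { induction P0 as [|p P0 [hs [Hhs1 Hhs2]]].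
    - exists nil. split. intros h []. intros g _ [p [[] _]].
    - destruct (classic (exists g0, Lip0_ball dY y0 g0 /\ close g0 p)) as [[g0 [Hg0 Hcg0]]|Hn].
      + exists ((fun x => g0 (f x)) :: hs). split.
        * intros h [<-|Hh]. exists g0; auto. apply Hhs1; auto.
        * intros g Hg [p' [[<-|Hp'] Hc]].
          -- exists (fun x => g0 (f x)). split. left; auto.
             apply Hflat; auto. intros y Hy.
             destruct (Forall2_both _ _ _ _ (fun g1 : Y -> K => g1 y) Hc Hcg0) as [z [Hz1 Hz2]].
             { unfold fs. apply in_map_iff. exists y; auto. }
             cbv beta in Hz1, Hz2.
             eapply Rle_trans. apply (abs_tri3 _ z). rewrite (abs_minus z). lra.
          -- destruct (Hhs2 g Hg) as [h [Hh Hl]]. exists p'; auto.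
             exists h. split; auto. right; auto.
      + exists hs. split; auto. intros g Hg [p' [[<-|Hp'] Hc]].
        * exfalso. apply Hn. exists g; auto.
        * apply Hhs2; auto. exists p'; auto. }
  destruct (Claim P) as [hs [H1 H2]]. exists hs. split; auto.
  intros g Hg. apply H2; auto.
  destruct (HP g Hg) as [p [Hp1 Hp2]]. exists p. split; auto.
Qed.

Lemma refine (psi : nat -> functional K X) eps : 0 < eps ->
  (forall n, in_dual dX x0 (psi n) /\ dnorm_le dX x0 (psi n) 1) ->
  exists s : nat -> nat, (forall n, (s n < s (S n))%nat) /\
   forall i j (g : Y -> K), Lip0_ball dY y0 g ->
     abs (minus (psi (s i) (fun x => g (f x))) (psi (s j) (fun x => g (f x)))) <= eps.
Proof.
  intros Heps Hpsi.
  destruct (net (eps/3)) as [hs [Hhs1 Hhs2]]. lra.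
  set (fs := map (fun h (n : nat) => psi n h) hs).
  destruct (patterns (fun _ : nat => True) fs (Lf + 1) (eps/6)) as [P HP]. lra.
  { intros n F _ HF. unfold fs in HF. apply in_map_iff in HF. destruct HF as [h [<- Hh]].
    destruct (Hhs1 h Hh) as [g [Hg ->]]. destruct (Hpsi n) as [Hd Hb].
    rewrite <- (Rmult_1_l (Lf+1)). apply (scale_bound Kabsm Kscale dX x0); auto.
    apply in_dual_lin; auto. apply comp_Lip0. apply ball_Lip0; auto.
    apply lip_mono with (L := 1 * Lf); auto. apply comp_lip; [apply Hg|lra]. lra. lra. }
  destruct (pigeon P (fun n p => Forall2 (fun F z => abs (minus (F n) z) <= eps/6) fs p))
    as [p [Hp HQ]].
  { intros n. apply HP; auto. }
  assert (Hch : forall N, {n | (N <= n)%nat /\ Forall2 (fun F z => abs (minus (F n) z) <= eps/6) fs p}).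
  { intros N. apply constructive_indefinite_description. apply HQ. }
  set (ch := fun N => proj1_sig (Hch N)).
  assert (Hch1 : forall N, (N <= ch N)%nat /\ Forall2 (fun F z => abs (minus (F (ch N)) z) <= eps/6) fs p).
  { intros N. unfold ch. apply (proj2_sig (Hch N)). }
  set (s := fix s k := match k with O => ch O | S k => ch (S (s k)) end).
  exists s. split.
  - intros n. change (s n < ch (S (s n)))%nat. destruct (Hch1 (S (s n))). lia.
  - intros i j g Hg.
    assert (Qs : forall k, Forall2 (fun F z => abs (minus (F (s k)) z) <= eps/6) fs p).
    { intros [|k]; apply Hch1. }
    destruct (Hhs2 g Hg) as [h [Hh Hl]].
    destruct (Hhs1 h Hh) as [g' [Hg' Eh]].
    assert (HLgf : Lip0 dX x0 (fun x => g (f x))) by (apply comp_Lip0; apply ball_Lip0; auto).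
    assert (HLh : Lip0 dX x0 h) by (rewrite Eh; apply comp_Lip0; apply ball_Lip0; auto).
    assert (HLd : Lip0 dX x0 (fun x => minus (g (f x)) (h x))).
    { split. rewrite Eh. cbv beta. rewrite Hf0. destruct Hg as [-> _]. destruct Hg' as [-> _].
      apply (minus_eq_zero (G:=K)). exists (eps/3). auto. }
    assert (Bk : forall k, abs (minus (psi k (fun x => g (f x))) (psi k h)) <= eps / 3).
    { intros k. destruct (Hpsi k) as [Hd Hb].
      pose proof (lin_minus dX x0 (psi k) (fun x => g (f x)) h Hd HLgf HLh) as E.
      rewrite <- E. rewrite <- (Rmult_1_l (eps/3)).
      apply (scale_bound Kabsm Kscale dX x0); auto. apply in_dual_lin; auto. lra. }
    destruct (Forall2_both _ _ _ _ (fun n => psi n h) (Qs i) (Qs j)) as [z [Hz1 Hz2]].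
    { unfold fs. apply in_map_iff. exists h; auto. }
    cbv beta in Hz1, Hz2.
    eapply Rle_trans. apply (abs_tri3 _ (psi (s i) h)).
    eapply Rle_trans. apply Rplus_le_compat_l. apply (abs_tri3 _ (psi (s j) h)).
    pose proof (Bk (s i)). pose proof (Bk (s j)).
    rewrite (abs_minus (psi (s j) h)).
    assert (abs (minus (psi (s i) h) (psi (s j) h)) <= eps / 3).
    { eapply Rle_trans. apply (abs_tri3 _ z). rewrite (abs_minus z). lra. }
    lra.
Qed.

Lemma arch eps : 0 < eps -> exists k : nat, / (INR k + 1) <= eps.
Proof.
  intros H. destruct (archimed_cor1 eps H) as [N [H1 H2]]. exists N.
  apply lt_0_INR in H2. left. eapply Rle_lt_trans; [|exact H1].
  apply Rinv_le_contravar; lra.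
Qed.

Lemma inv_pos k : 0 < / (INR k + 1).
Proof. apply Rinv_0_lt_compat. pose proof (pos_INR k). lra. Qed.

Lemma inv_mono k m : (k <= m)%nat -> / (INR m + 1) <= / (INR k + 1).
Proof. intros H. apply Rinv_le_contravar. pose proof (pos_INR k). lra. apply le_INR in H. lra. Qed.

Lemma incr_mono (s : nat -> nat) : (forall n, (s n < s (S n))%nat) -> forall a b, (a < b)%nat -> (s a < s b)%nat.
Proof.
  intros H a b Hab. induction b as [|b IH]. lia.
  destruct (Nat.eq_dec a b) as [->|Hne]. apply H. specialize (H b). assert (a < b)%nat by lia. specialize (IH H0). lia.
Qed.

Lemma incr_ge (s : nat -> nat) : (forall n, (s n < s (S n))%nat) -> forall n, (n <= s n)%nat.
Proof. intros H n. induction n. lia. specialize (H n). lia. Qed.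

Lemma diag (phi : nat -> functional K X) :
  (forall n, in_free dX x0 (phi n) /\ dnorm_le dX x0 (phi n) 1) ->
  exists D : nat -> nat, (forall n, (D n < D (S n))%nat) /\
   forall k a b (g : Y -> K), (k <= a)%nat -> (k <= b)%nat -> Lip0_ball dY y0 g ->
     abs (minus (phi (D a) (fun x => g (f x))) (phi (D b) (fun x => g (f x)))) <= / (INR k + 1).
Proof.
  intros Hphi.
  assert (Sel : forall (tau : nat -> nat) (k : nat), {s : nat -> nat |
     (forall n, (s n < s (S n))%nat) /\ forall i j (g : Y -> K), Lip0_ball dY y0 g ->
     abs (minus (phi (tau (s i)) (fun x => g (f x))) (phi (tau (s j)) (fun x => g (f x)))) <= / (INR k + 1)}).
  { intros tau k. apply constructive_indefinite_description.
    apply (refine (fun n => phi (tau n))). apply inv_pos.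
    intros n. destruct (Hphi (tau n)) as [[H1 _] H2]. split; auto. }
  set (sel := fun tau k => proj1_sig (Sel tau k)).
  assert (Hsel : forall tau k, (forall n, (sel tau k n < sel tau k (S n))%nat) /\
     forall i j (g : Y -> K), Lip0_ball dY y0 g ->
     abs (minus (phi (tau (sel tau k i)) (fun x => g (f x))) (phi (tau (sel tau k j)) (fun x => g (f x)))) <= / (INR k + 1)).
  { intros tau k. unfold sel. apply (proj2_sig (Sel tau k)). }
  set (tau := fix tau k := match k with O => sel (fun n => n) O | S k => fun n => tau k (sel (tau k) (S k) n) end).
  assert (Pinc : forall k n, (tau k n < tau k (S n))%nat).
  { induction k; intros n.
    - apply (Hsel (fun n => n) O).
    - change (tau k (sel (tau k) (S k) n) < tau k (sel (tau k) (S k) (S n)))%nat.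
      apply incr_mono; auto. apply (Hsel (tau k) (S k)). }
  assert (Pb : forall k i j (g : Y -> K), Lip0_ball dY y0 g ->
     abs (minus (phi (tau k i) (fun x => g (f x))) (phi (tau k j) (fun x => g (f x)))) <= / (INR k + 1)).
  { intros [|k] i j g Hg.
    - apply (Hsel (fun n => n) O); auto.
    - apply (Hsel (tau k) (S k)); auto. }
  assert (Nest : forall dd k n, exists a, tau (dd + k)%nat n = tau k a).
  { induction dd; intros k n. exists n; reflexivity.
    destruct (IHdd k (sel (tau (dd + k)%nat) (S (dd + k)) n)) as [a Ha].
    exists a. simpl. exact Ha. }
  exists (fun k => tau k k). split.
  - intros n. change (tau n (sel (tau n) (S n) (S n)) > tau n n)%nat.
    apply incr_mono; auto. pose proof (incr_ge _ (proj1 (Hsel (tau n) (S n))) (S n)). lia.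
  - intros k a b g Ha Hb Hg.
    destruct (Nest (a - k)%nat k a) as [a' Ea]. replace (a - k + k)%nat with a in Ea by lia.
    destruct (Nest (b - k)%nat k b) as [b' Eb]. replace (b - k + k)%nat with b in Eb by lia.
    rewrite Ea, Eb. apply Pb; auto.
Qed.

Definition conv (u : nat -> K) (l : K) :=
  forall eps, 0 < eps -> exists N, forall n, (N <= n)%nat -> abs (minus (u n) l) <= eps.

Lemma conv_unique u l1 l2 : conv u l1 -> conv u l2 -> l1 = l2.
Proof.
  intros H1 H2. apply (abs_le_all _ _ 2). intros eps He.
  destruct (H1 eps He) as [N1 HN1]. destruct (H2 eps He) as [N2 HN2].
  eapply Rle_trans. apply (abs_tri3 _ (u (N1 + N2)%nat)).
  rewrite abs_minus. pose proof (HN1 (N1 + N2)%nat ltac:(lia)). pose proof (HN2 (N1 + N2)%nat ltac:(lia)).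
  lra.
Qed.

Lemma conv_le u l v k c : (forall n, (k <= n)%nat -> abs (minus v (u n)) <= c) -> conv u l ->
  abs (minus v l) <= c.
Proof.
  intros H Hc. apply Rle_plus_epsilon. intros eps He.
  destruct (Hc eps He) as [N HN].
  eapply Rle_trans. apply (abs_tri3 _ (u (N + k)%nat)).
  pose proof (H (N + k)%nat ltac:(lia)). pose proof (HN (N + k)%nat ltac:(lia)). lra.
Qed.

Lemma conv_plus u v l1 l2 : conv u l1 -> conv v l2 -> conv (fun n => plus (u n) (v n)) (plus l1 l2).
Proof.
  intros H1 H2 eps He. destruct (H1 (eps/2)) as [N1 HN1]. lra. destruct (H2 (eps/2)) as [N2 HN2]. lra.
  exists (N1 + N2)%nat. intros n Hn. rewrite (minus_plus2 (G:=K)).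
  eapply Rle_trans. apply abs_triangle.
  pose proof (HN1 n ltac:(lia)). pose proof (HN2 n ltac:(lia)). lra.
Qed.

Lemma conv_scal a u l : conv u l -> conv (fun n => mult a (u n)) (mult a l).
Proof.
  intros H eps He. pose proof (abs_ge_0 a).
  destruct (H (eps / (abs a + 1))) as [N HN]. apply Rdiv_lt_0_compat; lra.
  exists N. intros n Hn. rewrite <- (mult_minus (K:=K)), Kabsm.
  specialize (HN n Hn).
  apply Rle_trans with (abs a * (eps / (abs a + 1))). apply Rmult_le_compat_l; auto.
  apply Rmult_le_reg_r with (abs a + 1). lra. unfold Rdiv.
  replace (abs a * (eps * / (abs a + 1)) * (abs a + 1)) with (abs a * eps) by (field; lra). nra.
Qed.

Lemma conv_ext u v l : (forall n, u n = v n) -> conv u l -> conv v l.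
Proof. intros E H eps He. destruct (H eps He) as [N HN]. exists N. intros n Hn. rewrite <- E. auto. Qed.

Theorem compact_gen : compact_operator dX x0 dY y0 T.
Proof.
  intros phi Hphi. destruct (diag phi Hphi) as [D [HD HDb]].
  pose proof HT as [Hmap [Hlin [C HC]]].
  set (u := fun (g : Y -> K) n => T (phi (D n)) g).
  assert (Hfr : forall n, in_free dY y0 (T (phi (D n)))).
  { intros n. apply Hmap. apply Hphi. }
  assert (Hcb : forall k a b g, (k <= a)%nat -> (k <= b)%nat -> Lip0_ball dY y0 g ->
     abs (minus (u g a) (u g b)) <= / (INR k + 1)).
  { intros k a b g Ha Hb Hg. unfold u. rewrite !T_id; auto; try apply ball_Lip0; auto; try apply Hphi. }
  assert (Hconv : forall g, Lip0 dY y0 g -> exists l, conv (u g) l).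
  { intros g Hg. apply Kcompl. intros eps He.
    pose proof Hg as [g0 [Lg HLg]].
    set (Lg' := Rmax Lg 0 + 1).
    assert (HLg' : lip_le dY g Lg') by (apply lip_pos; auto).
    assert (PLg : 0 < Lg') by (unfold Lg'; pose proof (Rmax_r Lg 0); lra).
    destruct (arch (eps / Lg')) as [k Hk]. apply Rdiv_lt_0_compat; lra.
    exists k. intros m n Hm Hn.
    set (chi := fdiff (T (phi (D m))) (T (phi (D n)))).
    assert (abs (chi g) <= / (INR k + 1) * Lg').
    { apply (scale_bound Kabsm Kscale dY y0); auto.
      - apply lin_s_fdiff; apply in_dual_lin; apply Hfr.
      - intros h Hh. apply Hcb; auto. }
    unfold chi, fdiff in H. fold (u g m) (u g n) in H.
    apply Rmult_le_compat_r with (r := Lg') in Hk; [|lra].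
    unfold Rdiv in Hk. rewrite Rmult_assoc, Rinv_l, Rmult_1_r in Hk by lra. lra. }
  set (psi := fun g => epsilon (inhabits (zero : K)) (fun l => conv (u g) l)).
  assert (Hpsi : forall g, Lip0 dY y0 g -> conv (u g) (psi g)).
  { intros g Hg. unfold psi. apply epsilon_spec. apply Hconv; auto. }
  assert (Hlim : forall k g n, (k <= n)%nat -> Lip0_ball dY y0 g ->
    abs (minus (u g n) (psi g)) <= / (INR k + 1)).
  { intros k g n Hn Hg. apply (conv_le (u g) _ _ k). intros m Hm. apply Hcb; auto.
    apply Hpsi. apply ball_Lip0; auto. }
  exists D, psi. split; auto. split.
  - split; [split; [|split]|].
    + intros g h Hg Hh. apply (conv_unique (u (fun x => plus (g x) (h x)))).
      apply Hpsi. apply Lip0_plus; auto.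
      apply conv_ext with (fun n => plus (u g n) (u h n)).
      { intros n. unfold u. symmetry. apply (proj1 (proj1 (Hfr n))); auto. }
      apply conv_plus; apply Hpsi; auto.
    + intros a g Hg. apply (conv_unique (u (fun x => mult a (g x)))).
      apply Hpsi. apply Lip0_scal; auto.
      apply conv_ext with (fun n => mult a (u g n)).
      { intros n. unfold u. symmetry. apply (proj1 (proj2 (proj1 (Hfr n)))); auto. }
      apply conv_scal; apply Hpsi; auto.
    + exists (C * 1 + 1). intros g Hg.
      destruct (Hpsi g (ball_Lip0 _ _ _ Hg) 1) as [N HN]. lra.
      eapply Rle_trans. apply (abs_via (u g N)).
      pose proof (HN N (le_n N)).
      assert (abs (u g N) <= C * 1). { unfold u. apply HC; auto. apply Hphi. apply Hphi. }
      lra.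
  + intros eps He. destruct (arch (eps / 2)) as [k Hk]. lra.
      destruct (proj2 (Hfr k) (eps / 2)) as [l Hl]. lra.
      exists l. intros g Hg. unfold fdiff.
      eapply Rle_trans. apply (abs_tri3 _ (u g k)).
      rewrite abs_minus. pose proof (Hlim k g k (le_n k) Hg).
      pose proof (Hl g Hg). unfold fdiff in H0. fold (u g k) in H0. lra.
  - intros eps He. destruct (arch eps He) as [N HN]. exists N. intros k Hk g Hg.
    unfold fdiff. fold (u g (D k)). pose proof (Hlim N g k Hk Hg). unfold u in *. lra.
Qed.

End Main.

Lemma real_step (eta : R) : 0 < eta -> forall n : nat, forall t, 0 <= t <= INR n * eta ->
  exists k, (k <= n)%nat /\ Rabs (t - INR k * eta) <= eta.
Proof.
  intros He n. induction n as [|n IH]; intros t Ht.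
  - exists O. split; auto. simpl in *. rewrite Rabs_pos_eq; nra.
  - destruct (Rle_or_lt t (INR n * eta)) as [H|H].
    + destruct (IH t) as [k [Hk1 Hk2]]. lra. exists k. split; auto.
    + exists (S n). split; auto. rewrite S_INR in *. rewrite Rabs_left1; nra.
Qed.

Lemma nat_above (x : R) : exists n : nat, x <= INR n.
Proof.
  destruct (archimed x) as [H1 _]. exists (Z.to_nat (up x)).
  destruct (Z_le_gt_dec 0 (up x)) as [Hz|Hz].
  - rewrite INR_IZR_INZ, Z2Nat.id by auto. lra.
  - apply Z.gt_lt in Hz. apply IZR_lt in Hz. pose proof (pos_INR (Z.to_nat (up x))). lra.
Qed.

Lemma real_grid (r eta : R) : 0 < eta -> exists G : list R,
  forall z, Rabs z <= r -> exists w, In w G /\ Rabs (z - w) <= eta.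
Proof.
  intros He. destruct (nat_above (2 * r / eta)) as [n Hn].
  exists (map (fun k => - r + INR k * eta) (seq 0 (S n))).
  intros z Hz. pose proof (Rle_abs z) as Ha1. pose proof (Rle_abs (- z)) as Ha2. rewrite Rabs_Ropp in Ha2.
  destruct (real_step eta He n (z + r)) as [k [Hk1 Hk2]].
  { split. lra. apply Rmult_le_compat_r with (r := eta) in Hn; [|lra].
    unfold Rdiv in Hn. rewrite Rmult_assoc, Rinv_l, Rmult_1_r in Hn by lra. lra. }
  exists (- r + INR k * eta). split.
  - apply (in_map (fun k => - r + INR k * eta)). apply in_seq. lia.
  - replace (z - (- r + INR k * eta)) with (z + r - INR k * eta) by ring. auto.
Qed.

Section RInst.
Lemma R_comm : forall a b : R_AbsRing, mult a b = mult b a.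
Proof. intros a b. exact (Rmult_comm a b). Qed.
Lemma R_absm : forall a b : R_AbsRing, abs (mult a b) = abs a * abs b.
Proof. intros a b. exact (Rabs_mult a b). Qed.
Lemma R_scale : forall r, 0 < r -> exists a : R_AbsRing, abs a = r.
Proof. intros r Hr. exists r. change (Rabs r = r). apply Rabs_pos_eq. lra. Qed.
Lemma R_grid : forall r eta, 0 < eta -> exists Gr : list R_AbsRing,
  forall z, abs z <= r -> exists w, In w Gr /\ abs (minus z w) <= eta.
Proof. intros r eta He. exact (real_grid r eta He). Qed.
Lemma R_compl : forall u : nat -> R_AbsRing,
  (forall eps, 0 < eps -> exists N, forall m n, (N <= m)%nat -> (N <= n)%nat -> abs (minus (u m) (u n)) <= eps) ->
  exists l, forall eps, 0 < eps -> exists N, forall n, (N <= n)%nat -> abs (minus (u n) l) <= eps.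
Proof.
  intros u Hu. destruct (Rcomplete.R_complete u) as [l Hl].
  { intros eps He. destruct (Hu (eps/2)) as [N HN]. lra. exists N. intros n m Hn Hm.
    unfold Rdist. specialize (HN n m Hn Hm). change (Rabs (u n - u m) <= eps / 2) in HN. lra. }
  exists l. intros eps He. destruct (Hl eps He) as [N HN]. exists N. intros n Hn.
  specialize (HN n Hn). unfold Rdist in HN. change (Rabs (u n - l) <= eps). lra.
Qed.
End RInst.

Section CInst.
Lemma C_comm : forall a b : C_AbsRing, mult a b = mult b a.
Proof. intros a b. exact (Cmult_comm a b). Qed.
Lemma C_absm : forall a b : C_AbsRing, abs (mult a b) = abs a * abs b.
Proof. intros a b. exact (Cmod_mult a b). Qed.
Lemma C_scale : forall r, 0 < r -> exists a : C_AbsRing, abs a = r.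
Proof. intros r Hr. exists (RtoC r). change (Cmod (RtoC r) = r). rewrite Cmod_R. apply Rabs_pos_eq. lra. Qed.

Lemma sqrt2_le : sqrt 2 <= 2.
Proof.
  rewrite <- (sqrt_square 2) at 2 by lra. apply sqrt_le_1_alt. lra.
Qed.

Lemma cmod_bound (x y : R) e : 0 <= e -> Rabs x <= e -> Rabs y <= e -> Cmod (x, y) <= 2 * e.
Proof.
  intros He Hx Hy. eapply Rle_trans. apply Cmod_2Rmax. simpl.
  pose proof sqrt2_le. assert (Rmax (Rabs x) (Rabs y) <= e) by (apply Rmax_lub; auto).
  pose proof (Rmax_l (Rabs x) (Rabs y)). pose proof (Rabs_pos x). pose proof (sqrt_pos 2).
  nra.
Qed.

Lemma C_grid : forall r eta, 0 < eta -> exists Gr : list C_AbsRing,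
  forall z, abs z <= r -> exists w, In w Gr /\ abs (minus z w) <= eta.
Proof.
  intros r eta He. destruct (real_grid r (eta/2)) as [G HG]. lra.
  exists (flat_map (fun a => map (fun b => (a, b)) G) G).
  intros [x y] Hz. change (Cmod (x, y) <= r) in Hz.
  pose proof (Rmax_Cmod (x, y)) as Hm. simpl in Hm.
  destruct (HG x) as [a [Ha1 Ha2]]. pose proof (Rmax_l (Rabs x) (Rabs y)). lra.
  destruct (HG y) as [b [Hb1 Hb2]]. pose proof (Rmax_r (Rabs x) (Rabs y)). lra.
  exists (a, b). split.
  - apply in_flat_map. exists a. split; auto. apply in_map; auto.
  - change (Cmod (x - a, y - b) <= eta).
    replace eta with (2 * (eta / 2)) by field. apply cmod_bound; auto. lra.
Qed.

Lemma C_compl : forall u : nat -> C_AbsRing,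
  (forall eps, 0 < eps -> exists N, forall m n, (N <= m)%nat -> (N <= n)%nat -> abs (minus (u m) (u n)) <= eps) ->
  exists l, forall eps, 0 < eps -> exists N, forall n, (N <= n)%nat -> abs (minus (u n) l) <= eps.
Proof.
  intros u Hu.
  assert (Hc : forall (p : C -> R), (forall z w : C, Rabs (p z - p w) <= Cmod (z - w)) ->
                 { l | Un_cv (fun n => p (u n)) l }).
  { intros p Hp. apply Rcomplete.R_complete. intros eps He. destruct (Hu (eps/2)) as [N HN]. lra.
    exists N. intros n m Hn Hm. unfold Rdist. specialize (HN n m Hn Hm).
    change (Cmod (u n - u m) <= eps / 2) in HN. pose proof (Hp (u n) (u m)). lra. }
  destruct (Hc fst) as [lx Hx].
  { intros [a b] [c d]. pose proof (Rmax_Cmod ((a, b) - (c, d))%C). simpl in *.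
    pose proof (Rmax_l (Rabs (a + - c)) (Rabs (b + - d))). unfold Rminus. lra. }
  destruct (Hc snd) as [ly Hy].
  { intros [a b] [c d]. pose proof (Rmax_Cmod ((a, b) - (c, d))%C). simpl in *.
    pose proof (Rmax_r (Rabs (a + - c)) (Rabs (b + - d))). unfold Rminus. lra. }
  exists (lx, ly). intros eps He.
  destruct (Hx (eps/2)) as [N1 HN1]. lra. destruct (Hy (eps/2)) as [N2 HN2]. lra.
  exists (N1 + N2)%nat. intros n Hn.
  specialize (HN1 n ltac:(lia)). specialize (HN2 n ltac:(lia)). unfold Rdist in *.
  change (Cmod (u n - (lx, ly)) <= eps). destruct (u n) as [a b]. simpl in *.
  change (Cmod (a - lx, b - ly) <= eps).
  replace eps with (2 * (eps / 2)) by field. apply cmod_bound; lra.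
Qed.
End CInst.

Theorem corollary2p6 (K : AbsRing) (HK : K = R_AbsRing \/ K = C_AbsRing)
  (X Y : Type) (dX : X -> X -> R) (dY : Y -> Y -> R) (x0 : X) (y0 : Y)
  (HmX : is_metric dX) (HmY : is_metric dY)
  (HcX : is_complete dX) (HcY : is_complete dY)
  (f : X -> Y) (Hlip : lipschitz_map dX dY f) (Hf0 : f x0 = y0)
  (* (P1) images of bounded sets are totally bounded *)
  (HP1 : forall S : X -> Prop, (exists r, forall x, S x -> dX x x0 <= r) ->
           forall eps, 0 < eps -> exists l : list Y,
             forall x, S x -> exists y, In y l /\ dY (f x) y <= eps)
  (* (P2) uniform local flatness *)
  (HP2 : forall eps, 0 < eps -> exists delta, 0 < delta /\
           forall x y, x <> y -> dX x y < delta -> dY (f x) (f y) <= eps * dX x y)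
  (* (P4) flatness at infinity *)
  (HP4 : forall eps, 0 < eps -> exists Rad, 0 < Rad /\
           forall x y, x <> y -> Rad <= dX x x0 -> Rad <= dX y x0 ->
             dY (f x) (f y) <= eps * dX x y)
  (* f-hat : the bounded linear operator F(M) -> F(N) with f-hat(delta x) = delta (f x) *)
  (T : functional K X -> functional K Y)
  (HT : bounded_linear_free dX x0 dY y0 T)
  (HTd : forall x, feq dY y0 (T (delta x)) (delta (f x))) :
  compact_operator dX x0 dY y0 T.
Proof.
  destruct Hlip as [L HL].
  assert (HL0 : 0 <= Rmax L 0) by apply Rmax_r.
  assert (HL' : forall x y, dY (f x) (f y) <= Rmax L 0 * dX x y).
  { intros x y. eapply Rle_trans. apply HL. apply Rmult_le_compat_r.
    destruct HmX as [Hn _]. apply Hn. apply Rmax_l. }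
  destruct HK as [-> | ->].
  - exact (compact_gen R_comm R_absm R_scale R_grid R_compl dX dY x0 y0 HmX HmY f (Rmax L 0)
           HL0 HL' Hf0 HP1 HP2 HP4 T HT HTd).
  - exact (compact_gen C_comm C_absm C_scale C_grid C_compl dX dY x0 y0 HmX HmY f (Rmax L 0)
           HL0 HL' Hf0 HP1 HP2 HP4 T HT HTd).
Qed.
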